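(* Let $n \geq 2$, $N = \frac{n(n+1)}{2}$, and identify $\mathbb{C}^N$ with arrays $v = (v_{r,s})_{1 \leq s \leq r \leq n}$ of complex numbers. Let $\mathbb{C}^N_{\mathrm{std}}$ be the set of standard points and $\mathbb{Z}^N_0$ the set of integral vectors whose row-$n$ entries vanish (see context). Let $W \subset \mathbb{Z}^N_0$ be a nonempty finite set and put $$S_W = \bigcap_{w \in W} \left(\mathbb{C}^N_{\mathrm{std}} - w\right), \qquad \text{where } \mathbb{C}^N_{\mathrm{std}} - w = \{v - w \mid v \in \mathbb{C}^N_{\mathrm{std}}\}.$$ Let $F \in \mathbb{C}(\lambda_{r,s} \mid 1 \leq s \leq r \leq n)$ be a rational function that has no poles in $S_W$. If $F(v) = 0$ for all $v \in S_W$, then $F = 0$.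
   Context: Coordinates on $\mathbb{C}^N$ are the variables $\lambda_{r,s}$, $1 \leq s \leq r \leq n$, so that $\lambda_{r,s}(v) = v_{r,s}$; rational functions on $\mathbb{C}^N$ are elements of the field $\mathbb{C}(\lambda_{r,s} \mid 1 \leq s \leq r \leq n)$. A point $v \in \mathbb{C}^N$ is called standard if for all $1 \leq i < k \leq n$ one has $v_{k,i} - v_{k-1,i} \in \mathbb{Z}_{\geq 0}$ and $v_{k-1,i} - v_{k,i+1} \in \mathbb{Z}_{>0}$; $\mathbb{C}^N_{\mathrm{std}}$ denotes the set of standard points. $\mathbb{Z}^N_0$ denotes the set of $z \in \mathbb{Z}^N$ with $z_{n,s} = 0$ for all $1 \leq s \leq n$. *)

(* Defs.v *)
From HB Require Import structures.
From mathcomp Require Import all_boot all_order all_algebra.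
From mathcomp Require Import fraction.
From mathcomp Require Import reals.
From mathcomp Require Import complex.
From mathcomp Require Import mpoly.

Set Implicit Arguments.
Unset Strict Implicit.
Unset Printing Implicit Defensive.

Import Order.TTheory GRing.Theory Num.Theory.
Local Open Scope ring_scope.

(* Index set {(r,s) | 1 <= s <= r <= n}, stored 0-based: p = (r-1, s-1). *)
Definition Idx (n : nat) := {p : 'I_n * 'I_n | (p.2 <= p.1)%N}.

Definition Ncoord (n : nat) : nat := #|{: Idx n}|.

(* Entry (r,s) of an array indexed by Idx n (1-based r,s); default d
   when (r,s) is out of range. *)
Definition entry (n : nat) (T : Type) (d : T) (v : Idx n -> T) (r s : nat) : T :=
  match [pick x : Idx n | ((val x).1 == r.-1 :> nat) && ((val x).2 == s.-1 :> nat)] with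
  | Some x => v x
  | None => d
  end.

Section Defs.
Variable (R : realType).
Local Notation C := (R[i]).

Definition isNatC (x : C) : Prop := exists m : nat, x = m%:R.
Definition isPosNatC (x : C) : Prop := exists m : nat, x = m.+1%:R.

Definition standard (n : nat) (v : Idx n -> C) : Prop :=
  forall i k : nat, (1 <= i)%N -> (i < k)%N -> (k <= n)%N ->
    isNatC (entry 0 v k i - entry 0 v k.-1 i) /\
    isPosNatC (entry 0 v k.-1 i - entry 0 v k i.+1).

Definition in_Z0 (n : nat) (z : {ffun Idx n -> int}) : Prop :=
  forall x : Idx n, nat_of_ord (val x).1 = n.-1 -> z x = 0%R.

Definition in_std_shift (n : nat) (w : {ffun Idx n -> int}) (v : Idx n -> C) : Prop :=
  exists u : Idx n -> C, standard u /\ v = (fun x => u x - (w x)%:~R).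

Definition S_W (n : nat) (W : seq {ffun Idx n -> int}) (v : Idx n -> C) : Prop :=
  forall w, w \in W -> in_std_shift w v.

(* Polynomials in the variables lambda_{r,s}; variable 'X_i corresponds to
   the coordinate enum_val i : Idx n. *)
Definition polyC_N (n : nat) := {mpoly C[Ncoord n]}.
Definition ratfun (n : nat) := {fraction (polyC_N n)}.

Definition evalP (n : nat) (p : polyC_N n) (v : Idx n -> C) : C :=
  p.@[fun i : 'I_(Ncoord n) => v (enum_val i)].

Definition no_pole_at (n : nat) (F : ratfun n) (v : Idx n -> C) : Prop :=
  exists (p q : polyC_N n), evalP q v != 0 /\ F = FracField.tofrac p / FracField.tofrac q.

(* F(v) = 0 (value computed from any representation regular at v). *)
Definition vanishes_at (n : nat) (F : ratfun n) (v : Idx n -> C) : Prop :=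
  forall (p q : polyC_N n), evalP q v != 0 -> F = FracField.tofrac p / FracField.tofrac q -> evalP p v = 0.

End Defs.

(* Main.v *)
Require Import Defs.
From HB Require Import structures.
From mathcomp Require Import all_boot all_order all_algebra.
From mathcomp Require Import fraction reals complex mpoly.
From mathcomp Require Import zify.
From Stdlib Require Import FunctionalExtensionality.
Set Implicit Arguments.
Unset Strict Implicit.
Unset Printing Implicit Defensive.
Import Order.TTheory GRing.Theory Num.Theory.
Lemma base_uniq D B (c d : nat -> nat) :
  (forall j, c j < D) -> (forall j, d j < D) ->
  \sum_(j < B) c j * D ^ j = \sum_(j < B) d j * D ^ j ->
  forall j, j < B -> c j = d j.
Proof.
move=> hc hd; elim: B c d hc hd => [//|B IH] c d hc hd.
rewrite !big_ord_recl /= !expn0 !muln1.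
have sh (e : nat -> nat) : \sum_(i < B) e (bump 0 i) * D ^ bump 0 i
     = (\sum_(i < B) e i.+1 * D ^ i) * D.
  rewrite big_distrl /=; apply: eq_bigr => i _.
  by rewrite /bump /= add1n expnS mulnCA mulnC.
rewrite !sh => E.
have D0 : 0 < D by apply: leq_ltn_trans (hc 0).
have e0 : c 0 = d 0.
  have := congr1 (modn^~ D) E.
  by rewrite addnC modnMDl addnC modnMDl !modn_small.
move: E; rewrite e0 => /addnI /eqP; rewrite eqn_pmul2r // => /eqP E.
case=> [//|j] /=; rewrite ltnS => hj.
exact: (IH (fun i => c i.+1) (fun i => d i.+1)).
Qed.

Lemma digits_inj K D (f : 'I_K -> nat) (a b : 'I_K -> nat) :
  0 < D -> injective f -> (forall i, a i < D) -> (forall i, b i < D) ->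
  \sum_i a i * D ^ f i = \sum_i b i * D ^ f i -> a =1 b.
Proof.
move=> D0 injf ha hb E.
pose B := \sum_i (f i).+1.
have fB i : f i < B.
  by rewrite /B (bigD1 i) //= ltnS leq_addr.
pose c (a : 'I_K -> nat) j := \sum_i (f i == j) * a i.
have cf (a' : 'I_K -> nat) i : c a' (f i) = a' i.
  rewrite /c (bigD1 i) //= eqxx mul1n big1 ?addn0 // => k hk.
  by rewrite (inj_eq injf) (negbTE hk).
have cD (a' : 'I_K -> nat) : (forall i, a' i < D) -> forall j, c a' j < D.
  move=> ha' j; case: (pickP (fun i => f i == j)) => [i /eqP <-|h].
    by rewrite cf.
  by rewrite /c big1 // => i _; rewrite h.
have cS (a' : 'I_K -> nat) : \sum_i a' i * D ^ f i = \sum_(j < B) c a' j * D ^ j.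
  rewrite /c (eq_bigr (fun j : 'I_B => \sum_i (f i == j) * a' i * D ^ j)); last first.
    by move=> j _; rewrite big_distrl.
  rewrite exchange_big /=; apply: eq_bigr => i _.
  rewrite (bigD1 (Ordinal (fB i))) //= eqxx mul1n big1 ?addn0 // => j hj.
  have -> : (f i == j) = false.
    by apply/negbTE; apply: contra hj => /eqP e; apply/eqP/val_inj.
  by rewrite mul0n.
move=> i; rewrite -(cf a) -(cf b).
apply: (base_uniq (cD a ha) (cD b hb)); last exact: fB.
by rewrite -!cS.
Qed.

Lemma mnm_le_mdeg K (m : 'X_{1..K}) i : m i <= mdeg m.
Proof. by rewrite mdegE (bigD1 i) //= leq_addr. Qed.

Local Open Scope ring_scope.
Lemma kron (C : numDomainType) K (p : {mpoly C[K]}) (f : 'I_K -> nat) D T0 :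
  injective f -> (msize p <= D)%N ->
  (forall t : nat, (T0 <= t)%N -> p.@[fun i => (t%:R : C) ^+ (D ^ f i)] = 0) -> p = 0.
Proof.
move=> injf hD hv; case: (eqVneq p 0) => // nz; exfalso.
pose phi (m : 'X_{1..K}) := (\sum_i m i * D ^ f i)%N.
pose Q : {poly C} := \sum_(m <- msupp p) p@_m *: 'X^(phi m).
have evQ (x : C) : Q.[x] = p.@[fun i => x ^+ (D ^ f i)].
  rewrite mevalE horner_sum; apply: eq_bigr => m _.
  rewrite hornerZ hornerXn; congr (_ * _).
  rewrite /phi -prodrXr; apply: eq_bigr => i _.
  by rewrite -exprM mulnC.
have mD m i : m \in msupp p -> (m i < D)%N.
  move=> hm; apply: leq_trans hD; apply: leq_ltn_trans (mnm_le_mdeg m i) _.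
  exact: msize_mdeg_lt.
have D0 : (0 < D)%N.
  case E: (msupp p) (msupp_eq0 p) => [|m0 s]; first by rewrite eqxx (negbTE nz).
  move=> _; have hm0 : m0 \in msupp p by rewrite E mem_head.
  exact: leq_trans (leq_ltn_trans (leq0n _) (msize_mdeg_lt hm0)) hD.
have Qnz : Q != 0.
  case E: (msupp p) (msupp_eq0 p) => [|m0 s]; first by rewrite eqxx (negbTE nz).
  move=> _; have hm0 : m0 \in msupp p by rewrite E mem_head.
  apply/negP => /eqP Q0; move: (congr1 (fun q : {poly C} => q`_(phi m0)) Q0).
  rewrite coef0 /Q coef_sum (bigD1_seq m0) ?msupp_uniq //= coefZ coefXn eqxx mulr1.
  rewrite big1_seq ?addr0 => [|m /andP [hm1 hm2]].
    by move=> h; move: hm0; rewrite mcoeff_msupp h eqxx.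
  rewrite coefZ coefXn; case: eqP => [e|]; last by rewrite mulr0.
  exfalso; move/negP: hm1; apply; apply/eqP/mnmP.
  move=> i; apply: (@digits_inj K D f (fun i => m i) (fun i => m0 i) D0 injf _ _ (esym e)) => j.
    exact: mD.
  exact: mD.
pose rs := [seq ((T0 + j)%N%:R : C) | j <- iota 0 (size Q)].
suff [h1 h2] : all (root Q) rs /\ uniq rs.
  by have := max_poly_roots Qnz h1 h2; rewrite size_map size_iota ltnn.
split.
  by apply/allP => x /mapP [j _ ->]; rewrite /root evQ hv ?leq_addr.
rewrite map_inj_uniq ?iota_uniq // => j1 j2 /eqP; rewrite eqr_nat => /eqP.
by move/addnI.
Qed.

Section Main.
Variable (R : realType).
Local Notation C := (R[i]).

Definition iot (n : nat) (x : Idx n) : nat :=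
  ((n - (val x).2) * (2 * n) + (val x).1)%N.

Lemma iot_inj n : injective (@iot n).
Proof.
move=> x y; rewrite /iot => E.
have lt1 : forall z : Idx n, ((val z).1 < 2 * n)%N.
  move=> z; have := ltn_ord (val z).1; lia.
have h1 := congr1 (modn^~ (2 * n)%N) E.
rewrite !modnMDl !modn_small ?lt1 // in h1.
move: E; rewrite h1 => /addIn /eqP.
have n0 : (0 < 2 * n)%N by have := ltn_ord (val x).1; lia.
rewrite eqn_pmul2r // => /eqP h2.
have h2' : nat_of_ord (val x).2 = nat_of_ord (val y).2.
  have := ltn_ord (val x).2; have := ltn_ord (val y).2; lia.
apply: val_inj; case: (val x) h1 h2' => a b; case: (val y) => c d /= e1 e2.
by congr pair; apply: val_inj.
Qed.

Lemma exIdx n r s : (s <= r)%N -> (r < n)%N ->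
  {x : Idx n | nat_of_ord (val x).1 = r /\ nat_of_ord (val x).2 = s}.
Proof.
move=> hsr hr; have hs : (s < n)%N by apply: leq_ltn_trans hr.
by exists (exist _ (Ordinal hr, Ordinal hs) hsr).
Qed.

Lemma entryE n T d (v : Idx n -> T) r s (x : Idx n) :
  nat_of_ord (val x).1 = r.-1 -> nat_of_ord (val x).2 = s.-1 -> entry d v r s = v x.
Proof.
move=> h1 h2; rewrite /entry; case: pickP => [y /andP [/eqP e1 /eqP e2]|h].
  congr v; apply: val_inj; case: (val x) h1 h2 => a b; case: (val y) e1 e2 => c e /= e1 e2 f1 f2.
  by congr pair; apply: val_inj; rewrite /= ?e1 ?e2 ?f1 ?f2.
by move: (h x); rewrite h1 h2 !eqxx.
Qed.

Lemma int_nat (z : int) : (0 <= z)%R -> exists m : nat, z = m%:Z.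
Proof. by case: z => [m|m] // _; exists m. Qed.

Lemma pow_gap (t a b M : nat) : (2 * M + 2 <= t)%N -> (b < a)%N ->
  (t ^ b + 2 * M + 1 <= t ^ a)%N.
Proof.
move=> ht hab.
have t0 : (0 < t)%N by lia.
have h1 : (t ^ b.+1 <= t ^ a)%N by rewrite leq_pexp2l.
have h2 : (0 < t ^ b)%N by rewrite expn_gt0 t0.
rewrite expnS in h1; nia.
Qed.

Definition vt n (D t : nat) : Idx n -> C := fun x => (t ^ (D ^ iot x))%N%:R.

Lemma vt_S n (W : seq {ffun Idx n -> int}) (D t : nat) :
  (2 <= D)%N -> (2 * (\sum_(w <- W) \sum_x `|w x|%N) + 2 <= t)%N ->
  S_W W (vt D t).
Proof.
move=> hD ht w hw.
set M := (\sum_(w <- W) \sum_x `|w x|%N)%N in ht.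
have wM x : (`|w x|%N <= M)%N.
  rewrite /M (big_rem _ hw) /= (bigD1 x) //= -addnA leq_addr //.
pose U (x : Idx n) : int := ((t ^ (D ^ iot x))%N)%:Z + w x.
exists (fun x => (U x)%:~R); split; last first.
  apply: functional_extensionality => x; rewrite /U /vt intrD addrK.
  by rewrite -pmulrn.
have gap (x y : Idx n) : (iot y < iot x)%N -> (1 + U y <= U x)%R.
  move=> hxy.
  have := pow_gap (b := D ^ iot y) (a := D ^ iot x) ht.
  rewrite ltn_exp2l // => /(_ hxy) h.
  have := wM x; have := wM y; rewrite /U; lia.
move=> i k hi hik hkn.
have [x1 [a1 b1]] := @exIdx n k.-1 i.-1 ltac:(lia) ltac:(lia).
have [x2 [a2 b2]] := @exIdx n k.-2 i.-1 ltac:(lia) ltac:(lia).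
have [x3 [a3 b3]] := @exIdx n k.-1 i ltac:(lia) ltac:(lia).
rewrite (entryE _ _ (x := x1)) ?a1 ?b1 // (entryE _ _ (x := x2)) ?a2 ?b2 //.
rewrite (entryE _ _ (x := x3)) ?a3 ?b3 //.
rewrite -!intrB.
have e12 : (iot x2 < iot x1)%N.
  rewrite /iot a1 b1 a2 b2; lia.
have e23 : (iot x3 < iot x2)%N.
  rewrite /iot a3 b3 a2 b2.
  have -> : (n - i.-1 = (n - i) + 1)%N by lia.
  rewrite mulnDl; lia.
split.
  have [m hm] := int_nat (z := U x1 - U x2) ltac:(have := gap _ _ e12; lia).
  by exists m; rewrite hm -pmulrn.
have [m hm] := int_nat (z := U x2 - U x3 - 1) ltac:(have := gap _ _ e23; lia).
exists m; have -> : U x2 - U x3 = (m.+1)%:Z by lia.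
by rewrite -pmulrn.
Qed.

End Main.

Local Open Scope ring_scope.

Theorem mainTheorem1 (R : realType) (n : nat) (W : seq {ffun Idx n -> int})
  (F : ratfun R n) :
  (2 <= n)%N ->
  W != [::] ->
  (forall w, w \in W -> in_Z0 w) ->
  (forall v : Idx n -> R[i], S_W W v -> no_pole_at F v) ->
  (forall v : Idx n -> R[i], S_W W v -> vanishes_at F v) ->
  F = 0.
Proof.
move=> _ _ _ hpole hvan.
set M := (\sum_(w <- W) \sum_x `|w x|%N)%N.
have S0 := @vt_S R n W 2 (2 * M + 2) isT (leqnn _).
have [p [q [hq hF]]] := hpole _ S0.
have q0 : q != 0 by apply: contraNneq hq => ->; rewrite /evalP meval0.
have pz : p = 0.
  pose f (i : 'I_(Ncoord n)) := iot (enum_val i).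
  have injf : injective f by move=> i j /iot_inj /enum_val_inj.
  apply: (@kron _ _ p f (msize p + 2) (2 * M + 2) injf (leq_addr _ _)).
  move=> t ht.
  have St := @vt_S R n W (msize p + 2) t (leq_addl _ _) ht.
  have [p' [q' [hq' hF']]] := hpole _ St.
  have hp' := hvan _ St p' q' hq' hF'.
  have q'0 : q' != 0 by apply: contraNneq hq' => ->; rewrite /evalP meval0.
  have e : p * q' = p' * q.
    apply/eqP; rewrite -tofrac_eq !tofracM -eqr_div ?tofrac_eq0 //.
    by rewrite -hF -hF'.
  have := congr1 (fun r : polyC_N R n => evalP r (vt R (msize p + 2) t)) e.
  rewrite /evalP !mevalM -/(evalP p' _) hp' mul0r => /eqP.
  rewrite mulf_eq0 (negbTE hq') orbF => /eqP <-.
  by apply: meval_eq => i; rewrite /vt natrX.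
by rewrite hF pz tofrac0 mul0r.
Qed.
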